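(* Let $\frac12\le M<\frac23$ and consider Algorithm C on an input whose optimal offline makespan is $1$. If job $j$ is handled by Step 5, then with $\gamma_j=y_{j-1}+p_j-(2-M)$ the chosen set $W$ satisfies $\gamma_j\le w_j\le M\cdot p_j$.
   Context: Model (two hierarchical machines with migration, bin stretching). Jobs $1,2,\dots,n$ arrive one by one. Job $j$ has a size $p_j>0$ and a grade of service (GoS) $g_j\in\{1,2\}$; a job of GoS $1$ may only be processed on machine $m_1$, a job of GoS $2$ may be processed on $m_1$ or on $m_2$. When job $j$ arrives, the algorithm must assign it, and may migrate previously arrived jobs (respecting GoS) of total size at most $M\cdot p_j$. The optimal offline makespan of the complete input is known in advance and scaled to $1$. Notation: $Y_{j}$ is the set of jobs on $m_2$ just after job $j$ has been handled, $y_j$ its total size, $y_0=0$; $p^{\max Y}_j$ is the largest size of a job in $Y_{j-1}$ ($0$ if empty); ''sorted $Y_{j-1}$'' lists $Y_{j-1}$ in non-increasing order of size; $w_j$ is the total size of the chosen set $W$. Algorithm C (parameter $M$). On arrival of job $j$: Step 2: if $g_j=1$ or $y_{j-1}\ge M$, assign $j$ to $m_1$. Step 3: else if $y_{j-1}+p_j\le 2-M$, assign $j$ to $m_2$. Step 4: else if $p^{\max Y}_j>M\cdot p_j$, assign $j$ to $m_1$. Step 5: otherwise let $W$ be the shortest prefix of sorted $Y_{j-1}$ with total size at least $p_j+y_{j-1}-(2-M)$ (or $W=Y_{j-1}$ if none exists); migrate the jobs of $W$ to $m_1$ and assign $j$ to $m_2$. *)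

(* Defs.v *)
(* Jobs are indexed 0..n-1 (job j+1 of the paper is job j here). *)
From mathcomp Require Import all_boot all_order all_algebra.
Set Implicit Arguments. Unset Strict Implicit. Unset Printing Implicit Defensive.
Import Order.TTheory GRing.Theory Num.Theory.
Local Open Scope ring_scope.

Section AlgC.
Variable R : realFieldType.
Variable M : R.
Variable p : nat -> R.
Variable g : nat -> nat.     (* grades of service, in {1,2} *)

Definition load (Y : seq nat) : R := \sum_(i <- Y) p i.

Definition pmaxY (Y : seq nat) : R := foldr Num.max 0 (map p Y).

Definition sortY (Y : seq nat) : seq nat := sort (fun a b => p b <= p a) Y.

(* shortest prefix of s with total size >= thr, or s itself if none exists *)
Definition shortest_prefix (s : seq nat) (thr : R) : seq nat :=
  take (find (fun k => thr <= load (take k s)) (iota 0 (size s).+1)) s.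

Definition Wof (Y : seq nat) (j : nat) : seq nat :=
  shortest_prefix (sortY Y) (load Y + p j - (2 - M)).

Definition stepOf (Y : seq nat) (j : nat) : nat :=
  if (g j == 1%N) || (M <= load Y) then 2%N
  else if load Y + p j <= 2 - M then 3%N
  else if M * p j < pmaxY Y then 4%N
  else 5%N.

Definition nextY (Y : seq nat) (j : nat) : seq nat :=
  match stepOf Y j with
  | 3%N => rcons Y j
  | 5%N => rcons [seq i <- Y | i \notin Wof Y j] j
  | _ => Y
  end.

(* Ystate k = contents of m2 just before job k arrives (after jobs 0..k-1) *)
Fixpoint Ystate (k : nat) : seq nat :=
  match k with
  | 0%N => [::]
  | k'.+1 => nextY (Ystate k') k'
  end.
End AlgC.

(* Offline schedules of jobs 0..n-1: a j = true means job j is on m2. *)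
Definition feasible_sched (n : nat) (g : nat -> nat) (a : nat -> bool) : Prop :=
  forall j, (j < n)%N -> g j = 1%N -> a j = false.

Definition load_m1 (R : realFieldType) (n : nat) (p : nat -> R) (a : nat -> bool) : R :=
  \sum_(j < n | ~~ a j) p j.
Definition load_m2 (R : realFieldType) (n : nat) (p : nat -> R) (a : nat -> bool) : R :=
  \sum_(j < n | a j) p j.

Definition opt_is_one (R : realFieldType) (n : nat) (p : nat -> R) (g : nat -> nat) : Prop :=
  (exists a, feasible_sched n g a /\ load_m1 n p a <= 1 /\ load_m2 n p a <= 1)
  /\ (forall a, feasible_sched n g a -> 1 <= Num.max (load_m1 n p a) (load_m2 n p a)).

(* Main.v *)
Require Import Defs.
From mathcomp Require Import all_boot all_order all_algebra.
From mathcomp Require Import ring lra.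
Import Order.TTheory GRing.Theory Num.Theory.
Local Open Scope ring_scope.

Lemma Ystate_lt (R : realFieldType) (M : R) p g k :
  forall i, i \in Ystate M p g k -> (i < k)%N.
Proof.
elim: k => [//|k IH] i /=.
rewrite /nextY; case: (stepOf _ _ _ _ _) => [|[|[|[|[|[|m]]]]]];
  try by move=> /IH /ltnW.
- rewrite mem_rcons in_cons => /orP[/eqP->//|/IH/ltnW//].
- rewrite mem_rcons in_cons => /orP[/eqP->//|]; rewrite mem_filter => /andP[_ /IH/ltnW//].
Qed.

Lemma load_take_step (R : realFieldType) (p : nat -> R) (B : R) (t : seq nat) m :
  0 <= B -> (forall y, y \in t -> 0 <= p y <= B) ->
  load p (take m.+1 t) <= load p (take m t) + B.
Proof.
move=> B0; elim: t m => [|y t IH] m Ht /=.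
  by rewrite /load big_nil add0r.
have /andP[_ hy] := Ht y (mem_head _ _).
case: m => [|m] /=.
  rewrite /= take0 /load big_cons !big_nil addr0 add0r //.
rewrite /load !big_cons -addrA lerD2l.
by apply: IH => z hz; apply: Ht; rewrite in_cons hz orbT.
Qed.

Lemma load_ge0 (R : realFieldType) (p : nat -> R) (t : seq nat) :
  (forall y, y \in t -> 0 <= p y) -> 0 <= load p t.
Proof.
move=> H; rewrite /load big_seq; apply: sumr_ge0 => i /H //.
Qed.

Lemma pmaxY_ge (R : realFieldType) (p : nat -> R) (Y : seq nat) y :
  y \in Y -> p y <= pmaxY p Y.
Proof.
elim: Y => [//|z Y IH]; rewrite in_cons /pmaxY /= => /orP[/eqP->|/IH h].
  by rewrite le_max lexx.
by rewrite le_max h orbT.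
Qed.

Lemma pmaxY_ge0 (R : realFieldType) (p : nat -> R) (Y : seq nat) : 0 <= pmaxY p Y.
Proof. elim: Y => [|z Y IH] /=; first by rewrite /pmaxY. by rewrite /pmaxY /= le_max IH orbT. Qed.

Theorem mainTheorem11 (R : realFieldType) (M : R) (n : nat) (p : nat -> R) (g : nat -> nat) :
  2^-1 <= M -> M < 2 / 3 ->
  (forall j, (j < n)%N -> 0 < p j) ->
  (forall j, (j < n)%N -> g j = 1%N \/ g j = 2%N) ->
  opt_is_one n p g ->
  forall j, (j < n)%N ->
  stepOf M p g (Ystate M p g j) j = 5%N ->
  let Y := Ystate M p g j in
  let gamma := load p Y + p j - (2 - M) in
  gamma <= load p (Wof M p Y j) /\ load p (Wof M p Y j) <= M * p j.
Proof.
move=> HM1 HM2 Hpos _ [[a [_ [Ha1 Ha2]]] _] j jn Hst Y gamma.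
have Ypos : forall y, y \in Y -> 0 < p y.
  move=> y /Ystate_lt yj; apply: Hpos; exact: ltn_trans yj jn.
have pj0 := Hpos j jn.
have pj1 : p j <= 1.
  have key : forall P : pred 'I_n, P (Ordinal jn) -> p j <= \sum_(i < n | P i) p i.
    move=> P HP; rewrite (bigD1 (Ordinal jn)) //= lerDl.
    by apply: sumr_ge0 => i _; apply/ltW/Hpos.
  case E: (a j).
  - apply: le_trans Ha2; apply: (key (fun i : 'I_n => a i)); exact: E.
  - apply: le_trans Ha1; apply: (key (fun i : 'I_n => ~~ a i)); by rewrite /= E.
move: Hst; rewrite /stepOf -/Y.
case: ifP => // h1; case: ifP => // h2; case: ifP => // h3 _.
have yM : load p Y < M by move/negbT: h1; rewrite negb_or -ltNge => /andP[].
move/negbT: h2; rewrite -ltNge => h2.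
move/negbT: h3; rewrite -leNgt => h3.
set s := sortY p Y.
have perm_s : perm_eq s Y by rewrite /s /sortY perm_sort.
have loads : load p s = load p Y by rewrite /load (perm_big _ perm_s).
have mem_s : forall y, y \in s -> y \in Y by move=> y; rewrite (perm_mem perm_s).
have y0 : 0 <= load p Y by apply: load_ge0 => y /Ypos /ltW.
have gpos : 0 < gamma by rewrite /gamma; lra.
rewrite /Wof /shortest_prefix -/s -/Y -/gamma.
set f := (fun k => gamma <= load p (take k s)).
set k0 := find f (iota 0 (size s).+1).
split.
- case: (ltnP k0 (size s).+1) => hk.
  + have : has f (iota 0 (size s).+1) by rewrite has_find size_iota.
    move/(nth_find 0); rewrite -/k0 nth_iota // add0n; exact.
  + rewrite take_oversize; last by apply: leq_trans hk; exact: leqnSn.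
    rewrite loads /gamma; lra.
- have sB : forall y, y \in s -> 0 <= p y <= pmaxY p Y.
    move=> y /mem_s hy; rewrite (ltW (Ypos _ hy)) /=; exact: pmaxY_ge.
  have sn0 : forall y, y \in s -> 0 <= p y by move=> y /sB /andP[].
  case Ek: k0 => [|k].
    rewrite take0 /load big_nil; apply: mulr_ge0; lra.
  case: k Ek => [|k] Ek.
    apply: le_trans (@load_take_step R p _ s 0 (pmaxY_ge0 _ p Y) sB) _; rewrite take0 /load big_nil add0r //.
  have hk : (k.+1 < k0)%N by rewrite Ek.
  have hks : (k.+1 < (size s).+1)%N.
    apply: leq_trans hk _; have := find_size f (iota 0 (size s).+1); by rewrite size_iota.
  have := before_find 0 hk; rewrite nth_iota // add0n /f => /negbT; rewrite -ltNge => hL.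
  case Es: s => [|x s'].
    by rewrite /load big_nil; apply: mulr_ge0; lra.
  have srt : sorted (fun a b => p b <= p a) s by rewrite /s /sortY; apply: sort_sorted => u v; exact: le_total.
  rewrite Es /= in srt.
  have hall : all (fun b => p b <= p x) s'.
    apply: (order_path_min _ srt) => u v w /= q1 q2; exact: le_trans q2 q1.
  have sx : forall y, y \in x :: s' -> 0 <= p y <= p x.
    move=> y hy; rewrite sn0 ?Es //=; move: hy; rewrite in_cons => /orP[/eqP->//|hy].
    exact: (allP hall).
  have x0 : 0 <= p x by apply: sn0; rewrite Es mem_head.
  have step := @load_take_step R p _ (x :: s') k.+1 x0 sx.
  rewrite Es in hL.
  have px_le : p x <= load p (take k.+1 (x :: s')).
    rewrite /= /load big_cons lerDl; apply: load_ge0 => y hy.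
    by apply: sn0; rewrite Es in_cons (mem_take hy) orbT.
  have : load p (take k.+2 (x :: s')) <= 2 * gamma by lra.
  move=> h; apply: le_trans h _.
  rewrite /gamma.
  have : M * p j - 2 * (load p Y + p j - (2 - M)) >= 0.
    have e : M * p j - 2 * (load p Y + p j - (2 - M)) =
      (4 - 4 * M - (2 - M) * p j) + 2 * (M - load p Y) by ring.
    rewrite e; apply: addr_ge0; last lra.
    have : (2 - M) * p j <= 2 - M by rewrite ler_piMr //; lra.
    lra.
  lra.
Qed.
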